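(* Let $M$ be a finitely generated monoid and let $I$ be an ideal of $M$. If $M$ is strongly $\delta$-hyperbolic (with respect to some finite generating set, for some real $\delta\ge 0$) then the Rees quotient $M/I$ is strongly hyperbolic.
   Context: Directed graphs may have loops and multiple edges; $d(u,v)$ is the length of a shortest directed path from $u$ to $v$ ($\infty$ if none). Out-ball $\overrightarrow{\mathcal{B}}_r(x)=\{y : d(x,y)\le r\}$, in-ball $\overleftarrow{\mathcal{B}}_r(x)=\{y : d(y,x)\le r\}$, extended to sets by union. A path $[x_0,\dots,x_n]$ is a geodesic if $n=d(x_0,x_n)$. A directed geodesic triangle is an ordered triple $(p,q,r)$ of geodesics with the end of $p$ equal to the start of $q$ and $p\circ q$ having the same start and end as $r$; it is $\delta$-thin if every vertex of $r$ lies in $\overrightarrow{\mathcal{B}}_\delta(p)\cup\overleftarrow{\mathcal{B}}_\delta(q)$, every vertex of $p$ lies in $\overrightarrow{\mathcal{B}}_\delta(r)\cup\overleftarrow{\mathcal{B}}_\delta(q)$, and every vertex of $q$ lies in $\overrightarrow{\mathcal{B}}_\delta(p)\cup\overleftarrow{\mathcal{B}}_\delta(r)$. A directed graph is strongly $\delta$-hyperbolic if all its directed geodesic triangles are $\delta$-thin. A monoid generated by a finite set $A$ is strongly $\delta$-hyperbolic w.r.t. $A$ if its right Cayley graph (vertex set the monoid, edge $m\to n$ for each $a\in A$ with $ma=n$) is strongly $\delta$-hyperbolic; it is strongly hyperbolic if this holds for some finite generating set and some $\delta$. The Rees quotient $M/I$ is $(M\setminus I)\cup\{0\}$ with the product of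 $x,y$ equal to $xy$ if $xy\notin I$ and $0$ otherwise (and $0$ a zero element). *)

(* Defs.v *)
From Stdlib Require Import Reals List Classical ClassicalEpsilon.
Import ListNotations.
Set Implicit Arguments.
Open Scope R_scope.

(** Loops / multiple edges are irrelevant for distances and geodesics, so a
    directed (multi)graph is represented by its edge relation [E u v]
    ("there is at least one edge u -> v"). *)

Section Graphs.
Variable V : Type.
Variable E : V -> V -> Prop.

Fixpoint chain (x : V) (l : list V) : Prop :=
  match l with
  | [] => True
  | y :: l' => E x y /\ chain y l'
  end.

(** A path [x0; ...; xn] is represented as the pair (x0, [x1; ...; xn]). *)
Definition path_start (p : V * list V) : V := fst p.
Definition path_end (p : V * list V) : V := last (snd p) (fst p).
Definition path_len (p : V * list V) : nat := length (snd p).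
Definition is_path (p : V * list V) : Prop := chain (fst p) (snd p).
Definition on_path (v : V) (p : V * list V) : Prop := In v (fst p :: snd p).

Definition dist_le (u v : V) (n : nat) : Prop :=
  exists l : list V, chain u l /\ last l u = v /\ (length l <= n)%nat.

Definition geodesic (p : V * list V) : Prop :=
  is_path p /\ forall m : nat, dist_le (path_start p) (path_end p) m ->
                              (path_len p <= m)%nat.

Definition dist_le_R (u v : V) (delta : R) : Prop :=
  exists n : nat, INR n <= delta /\ dist_le u v n.

Definition in_out_ball (delta : R) (p : V * list V) (y : V) : Prop :=
  exists x, on_path x p /\ dist_le_R x y delta.
Definition in_in_ball (delta : R) (p : V * list V) (y : V) : Prop :=
  exists x, on_path x p /\ dist_le_R y x delta.

Definition geodesic_triangle (p q r : V * list V) : Prop :=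
  geodesic p /\ geodesic q /\ geodesic r /\
  path_end p = path_start q /\
  path_start r = path_start p /\ path_end r = path_end q.

Definition thin_triangle (delta : R) (p q r : V * list V) : Prop :=
  (forall v, on_path v r -> in_out_ball delta p v \/ in_in_ball delta q v) /\
  (forall v, on_path v p -> in_out_ball delta r v \/ in_in_ball delta q v) /\
  (forall v, on_path v q -> in_out_ball delta p v \/ in_in_ball delta r v).

Definition strongly_hyperbolic_graph (delta : R) : Prop :=
  forall p q r, geodesic_triangle p q r -> thin_triangle delta p q r.

End Graphs.

Section Monoids.
Variable M : Type.
Variable mul : M -> M -> M.
Variable one : M.

Definition is_monoid : Prop :=
  (forall x y z, mul x (mul y z) = mul (mul x y) z) /\
  (forall x, mul one x = x) /\ (forall x, mul x one = x).

Definition generates (A : list M) : Prop :=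
  forall m : M, exists w : list M, (forall a, In a w -> In a A) /\
                                   m = fold_left mul w one.

Definition finitely_generated : Prop := exists A : list M, generates A.

Definition cayley_edge (A : list M) (m n : M) : Prop :=
  exists a, In a A /\ mul m a = n.

Definition strongly_delta_hyperbolic_wrt (A : list M) (delta : R) : Prop :=
  generates A /\ 0 <= delta /\ strongly_hyperbolic_graph (cayley_edge A) delta.

Definition strongly_hyperbolic_monoid : Prop :=
  exists (A : list M) (delta : R), strongly_delta_hyperbolic_wrt A delta.

Definition is_ideal (I : M -> Prop) : Prop :=
  (exists x, I x) /\ (forall x y, I x -> I (mul x y)) /\ (forall x y, I y -> I (mul x y)).

End Monoids.

(** * Rees quotient M/I: carrier (M \ I) ∪ {0}, with 0 represented by [None]. *)
Section Rees.
Variable M : Type.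
Variable mul : M -> M -> M.
Variable one : M.
Variable I : M -> Prop.

Definition rees_ok (o : option M) : Prop :=
  match o with None => True | Some x => ~ I x end.

Definition Rees : Type := { o : option M | rees_ok o }.

Definition rees_norm (o : option M) : option M :=
  match o with
  | Some a => if excluded_middle_informative (I a) then None else Some a
  | None => None
  end.

Lemma rees_norm_ok (o : option M) : rees_ok (rees_norm o).
Proof.
  destruct o as [a|]; simpl; auto.
  destruct (excluded_middle_informative (I a)); simpl; auto.
Qed.

Definition rees_mul_raw (x y : option M) : option M :=
  match x, y with
  | Some a, Some b => rees_norm (Some (mul a b))
  | _, _ => None
  end.

Definition rees_mul (x y : Rees) : Rees :=
  exist _ (rees_mul_raw (proj1_sig x) (proj1_sig y))
    (match proj1_sig x as ox, proj1_sig y as oy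
       return rees_ok (rees_mul_raw ox oy) with
     | Some a, Some b => rees_norm_ok (Some (mul a b))
     | Some _, None => Logic.I
     | None, _ => Logic.I
     end).

Definition rees_one : Rees := exist _ (rees_norm (Some one)) (rees_norm_ok _).

End Rees.

(* Main.v *)
Require Import Defs.
From Stdlib Require Import Reals List.
From Stdlib Require Import Classical ClassicalEpsilon Lra Lia.
Import ListNotations.
Set Implicit Arguments.
Open Scope R_scope.

Lemma val_inj (M : Type) (I : M -> Prop) (u v : Rees I) :
  proj1_sig u = proj1_sig v -> u = v.
Proof.
  destruct u as [a ha], v as [b hb]; simpl; intros ->. f_equal; apply proof_irrelevance.
Qed.

Definition zeroR (M : Type) (I : M -> Prop) : Rees I := exist (rees_ok I) None Logic.I.
Definition piR (M : Type) (I : M -> Prop) (x : M) : Rees I :=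
  exist (rees_ok I) (rees_norm I (Some x)) (rees_norm_ok I (Some x)).
Definition getM (M : Type) (I : M -> Prop) (one : M) (u : Rees I) : M :=
  match proj1_sig u with Some x => x | None => one end.
Definition genR (M : Type) (I : M -> Prop) (A : list M) : list (Rees I) :=
  zeroR I :: map (piR I) A.
Definition nz (M : Type) (I : M -> Prop) (u : Rees I) : Prop := proj1_sig u <> None.
Definition mapP (M : Type) (I : M -> Prop) (one : M) (P : Rees I * list (Rees I)) :=
  (getM one (fst P), map (getM one) (snd P)).

Lemma L_hom (M : Type) (mul : M -> M -> M) (I : M -> Prop) :
  is_ideal mul I -> forall x y,
  proj1_sig (rees_mul mul (piR I x) (piR I y)) = proj1_sig (piR I (mul x y)).
Proof.
  intros [_ [HL HR]] x y. unfold rees_mul, piR, rees_mul_raw, rees_norm; simpl.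
  destruct (excluded_middle_informative (I x)) as [hx|hx];
  destruct (excluded_middle_informative (I y)) as [hy|hy];
  destruct (excluded_middle_informative (I (mul x y))) as [hxy|hxy]; auto.
  - exfalso; apply hxy; auto.
  - exfalso; apply hxy; auto.
  - exfalso; apply hxy; auto.
Qed.

Lemma edge_to_zero (M : Type) (mul : M -> M -> M) (I : M -> Prop) (A : list M) u z :
  proj1_sig z = None -> cayley_edge (rees_mul mul (I:=I)) (genR I A) u z.
Proof.
  intros Hz. exists (zeroR I). split; [left; reflexivity|].
  apply val_inj; rewrite Hz; simpl. destruct (proj1_sig u); reflexivity.
Qed.

Lemma zero_absorb (M : Type) (mul : M -> M -> M) (I : M -> Prop) (A : list M) u v :
  cayley_edge (rees_mul mul (I:=I)) (genR I A) u v -> proj1_sig u = None -> proj1_sig v = None.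
Proof.
  intros [g [_ <-]] Hu. simpl. rewrite Hu. reflexivity.
Qed.

Lemma edge_RM (M : Type) (mul : M -> M -> M) (I : M -> Prop) (one : M) (A : list M) u v :
  cayley_edge (rees_mul mul (I:=I)) (genR I A) u v -> nz v ->
  cayley_edge mul A (getM one u) (getM one v).
Proof.
  intros [g [Hg <-]] Hn. unfold nz in Hn. destruct Hg as [<- | Hg].
  - exfalso; apply Hn; simpl; destruct (proj1_sig u); reflexivity.
  - apply in_map_iff in Hg. destruct Hg as [a [<- Ha]].
    destruct u as [[x|] hu]; simpl in *.
    + unfold getM; simpl. unfold rees_norm in *.
      destruct (excluded_middle_informative (I a)); simpl in *.
      * exfalso; apply Hn; reflexivity.
      * destruct (excluded_middle_informative (I (mul x a))); simpl in *.
        -- exfalso; apply Hn; reflexivity.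
        -- exists a; auto.
    + exfalso; apply Hn; reflexivity.
Qed.

Lemma edge_MR (M : Type) (mul : M -> M -> M) (I : M -> Prop) (A : list M) x y :
  is_ideal mul I -> cayley_edge mul A x y ->
  cayley_edge (rees_mul mul (I:=I)) (genR I A) (piR I x) (piR I y).
Proof.
  intros Hid [a [Ha <-]]. exists (piR I a). split.
  - right; apply in_map; auto.
  - apply val_inj. apply L_hom; auto.
Qed.

Lemma piR_getM (M : Type) (I : M -> Prop) (one : M) (u : Rees I) :
  nz u -> piR I (getM one u) = u.
Proof.
  destruct u as [[x|] hu]; unfold nz; simpl; intros Hn; [|exfalso; apply Hn; reflexivity].
  apply val_inj; unfold getM; simpl. unfold rees_norm.
  destruct (excluded_middle_informative (I x)); [contradiction | reflexivity].
Qed.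

Lemma last_cons (A : Type) (y x : A) l : last (y :: l) x = last l y.
Proof.
  revert y x; induction l as [|a l IH]; intros y x; [reflexivity|].
  change (last (y :: a :: l) x) with (last (a :: l) x). rewrite !IH. reflexivity.
Qed.

Lemma last_map' (A B : Type) (f : A -> B) l d : last (map f l) (f d) = f (last l d).
Proof.
  revert d; induction l as [|a l IH]; intros d; [reflexivity|].
  change (map f (a :: l)) with (f a :: map f l). rewrite !last_cons. apply IH.
Qed.

Lemma last_in (A : Type) (l : list A) d : In (last l d) (d :: l).
Proof.
  revert d; induction l as [|a l IH]; intros d; [left; reflexivity|].
  rewrite last_cons. right; apply IH.
Qed.

Lemma chain_nz (M : Type) (mul : M -> M -> M) (I : M -> Prop) (A : list M) :
  forall l u, chain (cayley_edge (rees_mul mul (I:=I)) (genR I A)) u l -> nz (last l u) ->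
  forall v, In v (u :: l) -> nz v.
Proof.
  induction l as [|y l IH]; intros u Hc Hn v Hv.
  - destruct Hv as [<-|[]]; exact Hn.
  - destruct Hc as [He Hc]. rewrite last_cons in Hn. specialize (IH y Hc Hn).
    destruct Hv as [<-|Hv]; [| apply IH; exact Hv].
    intro Hu. apply (IH y (or_introl eq_refl)). exact (zero_absorb He Hu).
Qed.

Lemma chain_RM (M : Type) (mul : M -> M -> M) (I : M -> Prop) (one : M) (A : list M) :
  forall l u, chain (cayley_edge (rees_mul mul (I:=I)) (genR I A)) u l ->
  (forall v, In v (u :: l) -> nz v) ->
  chain (cayley_edge mul A) (getM one u) (map (getM one) l).
Proof.
  induction l as [|y l IH]; intros u Hc Hall; simpl; auto.
  destruct Hc as [He Hc]. split.
  - apply edge_RM; auto. apply Hall; right; left; auto.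
  - apply IH; auto. intros v Hv; apply Hall; right; auto.
Qed.

Lemma chain_MR (M : Type) (mul : M -> M -> M) (I : M -> Prop) (A : list M) :
  is_ideal mul I -> forall l x, chain (cayley_edge mul A) x l ->
  chain (cayley_edge (rees_mul mul (I:=I)) (genR I A)) (piR I x) (map (piR I) l).
Proof.
  intros Hid; induction l as [|y l IH]; intros x Hc; simpl; auto.
  destruct Hc as [He Hc]. split; [apply edge_MR; auto | apply IH; auto].
Qed.

Lemma dist_MR (M : Type) (mul : M -> M -> M) (I : M -> Prop) (one : M) (A : list M) u v n :
  is_ideal mul I -> nz u -> nz v ->
  dist_le (cayley_edge mul A) (getM one u) (getM one v) n ->
  dist_le (cayley_edge (rees_mul mul (I:=I)) (genR I A)) u v n.
Proof.
  intros Hid Hu Hv [l [Hc [Hl Hn]]].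
  rewrite <- (piR_getM one Hu), <- (piR_getM one Hv).
  exists (map (piR I) l). split; [apply chain_MR; auto|split].
  - rewrite last_map', Hl; reflexivity.
  - rewrite length_map; auto.
Qed.

Lemma dist_R (M : Type) (mul : M -> M -> M) (I : M -> Prop) (one : M) (A : list M) u v d :
  is_ideal mul I -> nz u -> nz v ->
  dist_le_R (cayley_edge mul A) (getM one u) (getM one v) d ->
  dist_le_R (cayley_edge (rees_mul mul (I:=I)) (genR I A)) u v (d + 1).
Proof.
  intros Hid Hu Hv [n [Hn Hd]]. exists n; split; [lra| apply dist_MR with one; auto].
Qed.

Lemma geod_RM (M : Type) (mul : M -> M -> M) (I : M -> Prop) (one : M) (A : list M) P :
  is_ideal mul I ->
  geodesic (cayley_edge (rees_mul mul (I:=I)) (genR I A)) P -> nz (path_end P) ->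
  geodesic (cayley_edge mul A) (mapP one P).
Proof.
  destruct P as [u l]. intros Hid [Hp Hmin] Hn.
  pose proof (chain_nz mul A Hp Hn) as Hall.
  split.
  - apply chain_RM; auto.
  - intros m Hd. unfold path_len, mapP; simpl; rewrite length_map.
    apply (Hmin m). unfold path_start, path_end, mapP in *; simpl in *.
    rewrite last_map' in Hd. apply dist_MR with one; auto; apply Hall; left; auto.
Qed.

Lemma on_fwd (M : Type) (I : M -> Prop) (one : M) v (P : Rees I * list (Rees I)) :
  on_path v P -> on_path (getM one v) (mapP one P).
Proof.
  unfold on_path, mapP; simpl. intros [<-|H]; [left; auto | right; apply in_map; auto].
Qed.

Lemma on_rev (M : Type) (I : M -> Prop) (one : M) x (P : Rees I * list (Rees I)) :
  on_path x (mapP one P) -> exists x', on_path x' P /\ getM one x' = x.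
Proof.
  unfold on_path, mapP; simpl. intros [<-|H].
  - exists (fst P); split; auto; left; auto.
  - apply in_map_iff in H. destruct H as [x' [<- Hx]]. exists x'; split; auto; right; auto.
Qed.

Lemma out_tr (M : Type) (mul : M -> M -> M) (I : M -> Prop) (one : M) (A : list M) d P y :
  is_ideal mul I -> (forall v, on_path v P -> nz v) -> nz y ->
  in_out_ball (cayley_edge mul A) d (mapP one P) (getM one y) ->
  in_out_ball (cayley_edge (rees_mul mul (I:=I)) (genR I A)) (d + 1) P y.
Proof.
  intros Hid Hall Hy [x [Hx Hd]]. destruct (on_rev Hx) as [x' [Hx' <-]].
  exists x'; split; auto. apply dist_R with one; auto.
Qed.

Lemma in_tr (M : Type) (mul : M -> M -> M) (I : M -> Prop) (one : M) (A : list M) d P y :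
  is_ideal mul I -> (forall v, on_path v P -> nz v) -> nz y ->
  in_in_ball (cayley_edge mul A) d (mapP one P) (getM one y) ->
  in_in_ball (cayley_edge (rees_mul mul (I:=I)) (genR I A)) (d + 1) P y.
Proof.
  intros Hid Hall Hy [x [Hx Hd]]. destruct (on_rev Hx) as [x' [Hx' <-]].
  exists x'; split; auto. apply dist_R with one; auto.
Qed.

Lemma dist0 (V : Type) (E : V -> V -> Prop) x d : 0 <= d -> dist_le_R E x x d.
Proof. intros Hd. exists 0%nat; split; [simpl; lra| exists []; simpl; auto]. Qed.

Lemma start_on (V : Type) (P : V * list V) : on_path (path_start P) P.
Proof. left; reflexivity. Qed.

Lemma end_on (V : Type) (P : V * list V) : on_path (path_end P) P.
Proof. apply last_in. Qed.

Lemma short (V : Type) (P : V * list V) v :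
  (path_len P <= 1)%nat -> on_path v P -> v = path_start P \/ v = path_end P.
Proof.
  destruct P as [u [|w [|w' l]]]; unfold path_len, on_path, path_start, path_end; simpl; intros H1 H2.
  - destruct H2 as [<-|[]]; left; auto.
  - destruct H2 as [<-|[<-|[]]]; [left|right]; reflexivity.
  - lia.
Qed.

Lemma dist1_zero (M : Type) (mul : M -> M -> M) (I : M -> Prop) (A : list M) u z :
  proj1_sig z = None -> dist_le (cayley_edge (rees_mul mul (I:=I)) (genR I A)) u z 1.
Proof.
  intros Hz. exists [z]. split; [simpl; split; auto; apply edge_to_zero; auto|].
  split; [reflexivity| simpl; lia].
Qed.

Lemma fold_hom (M : Type) (mul : M -> M -> M) (I : M -> Prop) :
  is_ideal mul I -> forall w acc,
  fold_left (rees_mul mul (I:=I)) (map (piR I) w) (piR I acc) = piR I (fold_left mul w acc).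
Proof.
  intros Hid; induction w as [|a w IH]; intros acc; simpl; auto.
  rewrite <- IH. f_equal. apply val_inj. apply L_hom; auto.
Qed.

Theorem proposition4p8 (M : Type) (mul : M -> M -> M) (one : M) (I : M -> Prop) :
  is_monoid mul one ->
  finitely_generated mul one ->
  is_ideal mul I ->
  strongly_hyperbolic_monoid mul one ->
  strongly_hyperbolic_monoid (@rees_mul M mul I) (@rees_one M one I).
Proof.
  intros Hmon Hfg Hid [A [d [Hgen [Hd Hhyp]]]].
  exists (genR I A), (d + 1). split; [|split; [lra|]].
  - intros [[x|] hu].
    + destruct (Hgen x) as [w [Hw Hx]]. exists (map (piR I) w). split.
      * intros a Ha. apply in_map_iff in Ha. destruct Ha as [b [<- Hb]].
        right; apply in_map; auto.
      * change (rees_one one I) with (piR I one). rewrite fold_hom; auto.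
        apply val_inj; simpl. rewrite <- Hx. unfold rees_norm.
        destruct (excluded_middle_informative (I x)); [contradiction| reflexivity].
    + exists [zeroR I]. split; [intros a [<-|[]]; left; reflexivity|].
      apply val_inj; simpl. destruct (excluded_middle_informative (I one)); reflexivity.
  - intros p q r [Gp [Gq [Gr [Hpq [Hsr Her]]]]].
    destruct (proj1_sig (path_end r)) as [y|] eqn:Ey.
    + assert (Nr : nz (path_end r)) by (unfold nz; rewrite Ey; discriminate).
      assert (Nq : nz (path_end q)) by (rewrite <- Her; auto).
      assert (Allr := chain_nz mul A (proj1 Gr) Nr).
      assert (Allq := chain_nz mul A (proj1 Gq) Nq).
      assert (Np : nz (path_end p)) by (rewrite Hpq; apply Allq; left; reflexivity).
      assert (Allp := chain_nz mul A (proj1 Gp) Np).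
      assert (Ht : geodesic_triangle (cayley_edge mul A) (mapP one p) (mapP one q) (mapP one r)).
      { split; [apply geod_RM; auto|].
        split; [apply geod_RM; auto|].
        split; [apply geod_RM; auto|].
        unfold path_end, path_start, mapP in *; simpl.
        rewrite !last_map'. rewrite Hpq, Her, Hsr. auto. }
      destruct (Hhyp _ _ _ Ht) as [T1 [T2 T3]].
      split; [|split]; intros v Hv.
      * destruct (T1 _ (on_fwd one Hv)) as [H|H]; [left; apply out_tr with one|right; apply in_tr with one]; auto.
      * destruct (T2 _ (on_fwd one Hv)) as [H|H]; [left; apply out_tr with one|right; apply in_tr with one]; auto.
      * destruct (T3 _ (on_fwd one Hv)) as [H|H]; [left; apply out_tr with one|right; apply in_tr with one]; auto.
    + assert (Eq : proj1_sig (path_end q) = None) by (rewrite <- Her; auto).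
      assert (Sr : (path_len r <= 1)%nat) by (apply (proj2 Gr); apply dist1_zero; auto).
      assert (Sq : (path_len q <= 1)%nat) by (apply (proj2 Gq); apply dist1_zero; auto).
      assert (Hd1 : 0 <= d + 1) by lra.
      split; [|split]; intros v Hv.
      * destruct (short Sr Hv) as [->| ->].
        -- left. exists (path_start p); split; [apply start_on| rewrite Hsr; apply dist0; auto].
        -- right. exists (path_end q); split; [apply end_on| rewrite Her; apply dist0; auto].
      * right. exists (path_end q); split; [apply end_on|].
        exists 1%nat; split; [simpl; lra| apply dist1_zero; auto].
      * destruct (short Sq Hv) as [->| ->].
        -- left. exists (path_end p); split; [apply end_on| rewrite Hpq; apply dist0; auto].
        -- right. exists (path_end r); split; [apply end_on| rewrite Her; apply dist0; auto].
Qed.
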